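(* Let $p,q\ge 1$ be integers, $C$ a finite set, and $M\in\mathcal M(p,q,C)$. If $\gamma\in C$ satisfies $\operatorname{frq}(\gamma)=\operatorname{frq}(M)$, then $\operatorname{exc}(M)=\operatorname{exc}(\gamma)$.
   Context: $\mathcal M(p,q,C)$ is the set of $p\times q$ matrices $M$ with entries from $C$ such that each row of $M$ has $q$ pairwise distinct entries, each column has $p$ pairwise distinct entries, and every pair $\{\alpha,\beta\}$ of distinct colours of $C$ is good: there is a row or a column of $M$ containing both $\alpha$ and $\beta$. The frequency $\operatorname{frq}(\gamma)$ of $\gamma\in C$ is the number of entries of $M$ equal to $\gamma$, and $\operatorname{frq}(M)$ is the minimum frequency over all colours of $C$. The excess of a colour $\gamma$ of frequency $l$ is $\operatorname{exc}(\gamma)=l(p+q-l-1)-(|C|-1)$, and the excess $\operatorname{exc}(M)$ of $M$ is the minimum of the excesses of colours in $C$. *)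

(* Defs.v *)
From HB Require Import structures.
From mathcomp Require Import all_boot all_order all_algebra.
Set Implicit Arguments. Unset Strict Implicit. Unset Printing Implicit Defensive.
Import Order.TTheory GRing.Theory Num.Theory.

(* Minimum of a (nonempty) sequence; value 0 on the empty sequence. *)
Definition seqmin_nat (s : seq nat) : nat :=
  if s is x :: s' then foldr minn x s' else 0%N.
Definition seqmin_int (s : seq int) : int :=
  if s is x :: s' then foldr Num.min x s' else 0%R.

Definition in_MM (C : finType) (p q : nat) (M : 'M[C]_(p, q)) : Prop :=
  [/\ (forall i : 'I_p, injective (fun j : 'I_q => M i j)),
      (forall j : 'I_q, injective (fun i : 'I_p => M i j)) &
      (forall a b : C, a <> b ->
         (exists i : 'I_p, (exists j, M i j = a) /\ (exists j, M i j = b)) \/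
         (exists j : 'I_q, (exists i, M i j = a) /\ (exists i, M i j = b)))].

Definition frq (C : finType) (p q : nat) (M : 'M[C]_(p, q)) (c : C) : nat :=
  #|[set ij : 'I_p * 'I_q | M ij.1 ij.2 == c]|.

Definition frqM (C : finType) (p q : nat) (M : 'M[C]_(p, q)) : nat :=
  seqmin_nat [seq frq M c | c <- enum C].

Definition exc (C : finType) (p q : nat) (M : 'M[C]_(p, q)) (c : C) : int :=
  let l := Posz (frq M c) in
  (l * (Posz p + Posz q - l - 1) - (Posz #|C| - 1))%R.

Definition excM (C : finType) (p q : nat) (M : 'M[C]_(p, q)) : int :=
  seqmin_int [seq exc M c | c <- enum C].

(* Main.v *)
Require Import Defs.
From mathcomp Require Import all_boot all_order all_algebra.
From mathcomp Require Import zify.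
Import Order.TTheory GRing.Theory Num.Theory.

Lemma foldr_minn_le (a : nat) (s : seq nat) y : y \in a :: s -> (foldr minn a s <= y)%N.
Proof.
elim: s y => [|x s IH] y /=; first by rewrite inE => /eqP ->.
rewrite !inE => /or3P [/eqP ->| /eqP -> | ys].
- by rewrite geq_min IH ?mem_head ?orbT.
- by rewrite geq_min leqnn.
- by rewrite geq_min IH ?orbT // inE ys orbT.
Qed.

Lemma foldr_minr_in (a : int) (s : seq int) : foldr Num.min a s \in a :: s.
Proof.
elim: s => [|x s IH] /=; first by rewrite mem_head.
rewrite /Num.min; case: ifP => _; first by rewrite !inE eqxx orbT.
rewrite !inE in IH *; case/orP: IH => ->; by rewrite ?orbT.
Qed.

Lemma seqmin_int_eq (s : seq int) x : x \in s -> (forall y, y \in s -> (x <= y)%R) ->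
  seqmin_int s = x.
Proof.
case: s => [//|a s] xin H /=.
have hin := foldr_minr_in a s.
apply/eqP; rewrite eq_le H // andbT.
have: forall y, y \in a :: s -> (foldr Num.min a s <= y)%R.
  elim: s {xin H hin} => [|z s IH] y /=; first by rewrite inE => /eqP ->.
  rewrite !inE => /or3P [/eqP ->| /eqP -> | ys].
  - by rewrite ge_min IH ?mem_head ?orbT.
  - by rewrite ge_min lexx.
  - by rewrite ge_min IH ?orbT // inE ys orbT.
by apply.
Qed.

Lemma frq_le_p (p q : nat) (C : finType) (M : 'M[C]_(p, q)) c :
  in_MM M -> (frq M c <= p)%N /\ (frq M c <= q)%N.
Proof.
case=> Hr Hc _; rewrite /frq; set A := [set _ | _].
split.
- rewrite -(card_in_imset (f := fst)).
    by rewrite -[X in (_ <= X)%N](card_ord p) max_card.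
  move=> [i j] [i' j']; rewrite !inE /= => /eqP e1 /eqP e2 ei; subst i'.
  by congr pair; apply: (Hr i); rewrite /= e1 e2.
- rewrite -(card_in_imset (f := snd)).
    by rewrite -[X in (_ <= X)%N](card_ord q) max_card.
  move=> [i j] [i' j']; rewrite !inE /= => /eqP e1 /eqP e2 ei; subst j'.
  by congr pair; apply: (Hc j); rewrite /= e1 e2.
Qed.

Theorem lemma2 (p q : nat) (C : finType) (M : 'M[C]_(p, q)) (gamma : C) :
  (1 <= p)%N -> (1 <= q)%N -> in_MM M ->
  frq M gamma = frqM M ->
  excM M = exc M gamma.
Proof.
move=> _ _ HM Hg.
have Hmin : forall c, (frq M gamma <= frq M c)%N.
  move=> c; rewrite Hg /frqM.
  have : frq M c \in [seq frq M c | c <- enum C] by apply: map_f; rewrite mem_enum.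
  case: [seq _ | _ <- _] => [//|a s] /=; exact: foldr_minn_le.
apply: seqmin_int_eq; first by apply: map_f; rewrite mem_enum.
move=> y /mapP [c _ ->].
have [h1 h2] := @frq_le_p p q C M c HM.
have := Hmin c.
rewrite /exc; move: (frq M gamma) (frq M c) h1 h2 => m l h1 h2 hml.
rewrite lerD2r.
have [e|lt] := eqVneq m l; first by rewrite e.
have : (m < l)%N by rewrite ltn_neqAle lt hml.
move=> {}lt.
have H : (m + l <= p + q - 1)%N by lia.
nia.
Qed.
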